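(* Let $T\ge 2$ be an integer and $n=T^2$. Consider the family of Adaptive Sampling for Discovery (ASD) problems with unlabeled set $S^n=[n]=\{1,\dots,n\}$, parameter $\theta\in[0,1]^n$, and label distribution $\mathcal{D}_{\theta\mid x}=\mathcal{N}(\theta_x,1)$ for $x\in[n]$ (so $f_\theta(x)=\theta_x$). For any algorithm $\mathcal{A}$ there exists a prior distribution on $\theta\in[0,1]^n$ (i.e. over this family of ASD problems) such that $\mathcal{BR}(T,\mathcal{A})\ge cT$, where $c>0$ is a universal constant.
   Context: Adaptive Sampling for Discovery (ASD): an unknown parameter $\theta$ is drawn from a prior; given input $x$ the label is drawn from $\mathcal{D}_{\theta\mid x}$, and $f_\theta(x)=\mathbb{E}_{Y\sim\mathcal{D}_{\theta\mid x}}[Y]$. Starting from a finite unlabeled set $S^n$, at each step $t=1,\dots,T$ an algorithm chooses (possibly at random, based on the history $\mathcal{F}_t=\{(X_i,Y_i)\}_{i<t}$) a point $X_t\in S^n_t:=S^n\setminus\{X_1,\dots,X_{t-1}\}$ and observes $Y_t\sim\mathcal{D}_{\theta\mid X_t}$; each point can be labeled at most once. The regret is $R_T=\max_{x_1,\dots,x_T\in S^n \text{ distinct}}\sum_{t=1}^T f_\theta(x_t)-\sum_{t=1}^T f_\theta(X_t)$, and the Bayesian regret is $\mathcal{BR}(T,\mathcal{A})=\mathbb{E}[R_T]$, the expectation being over the prior on $\theta$, the labels, and the algorithm's randomness. *)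

(* Defs.v *)
From HB Require Import structures.
From mathcomp Require Import all_boot all_order all_algebra.
From mathcomp Require Import all_classical all_reals all_analysis.

Set Implicit Arguments.
Unset Strict Implicit.
Unset Printing Implicit Defensive.

Import Order.TTheory GRing.Theory Num.Theory.
Local Open Scope classical_set_scope.
Local Open Scope ring_scope.

(* A (possibly randomized) algorithm for horizon T: after k steps, given the
   history (X_1..X_k) = xs and (Y_1..Y_k) = ys, it picks X_{k+1} = x with
   probability [policy xs ys x].  It only picks unlabeled points, and the
   choice probabilities are (jointly Borel) measurable functions of the
   observed labels, so that all expectations are well defined. *)
Record algorithm (R : realType) (n T : nat) := Algorithm {
  policy : forall k : nat, k.-tuple 'I_n -> k.-tuple R -> 'I_n -> R;
  policy_ge0 : forall k (xs : k.-tuple 'I_n) ys x, 0 <= policy xs ys x;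
  policy_sum1 : forall k (xs : k.-tuple 'I_n) ys, (k < T)%N ->
    \sum_(x : 'I_n) policy xs ys x = 1;
  policy_unlabeled : forall k (xs : k.-tuple 'I_n) ys x,
    x \in (xs : seq 'I_n) -> policy xs ys x = 0;
  policy_measurable : forall k (xs : k.-tuple 'I_n) x,
    measurable_fun setT (fun ys : k.-tuple R => policy xs ys x)
}.

Section ASD.
Context {R : realType} {n T : nat} (A : algorithm R n T).
Local Open Scope ereal_scope.

Fixpoint exp_reward (theta : 'I_n -> R) (m k : nat)
    (xs : k.-tuple 'I_n) (ys : k.-tuple R) : \bar R :=
  match m with
  | 0 => 0
  | m'.+1 =>
      \sum_(x : 'I_n) (policy A xs ys x)%:E *
        ((theta x)%:E +
         \int[normal_prob (theta x) 1]_y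
            exp_reward theta m' [tuple of rcons xs x] [tuple of rcons ys y])
  end.

Definition expected_reward (theta : 'I_n -> R) : \bar R :=
  exp_reward theta T [tuple] [tuple].

Definition best_reward (theta : 'I_n -> R) : R :=
  (\big[Num.max/0%R]_(s : {ffun 'I_T -> 'I_n} | injectiveb s)
      \sum_(t : 'I_T) theta (s t))%R.

Definition expected_regret (theta : 'I_n -> R) : \bar R :=
  (best_reward theta)%:E - expected_reward theta.

(* Bayesian regret for a (finitely supported) prior given as a list of
   (weight, parameter) pairs. *)
Definition bayes_regret (prior : seq (R * {ffun 'I_n -> R})) : \bar R :=
  \sum_(p <- prior) (p.1)%:E * expected_regret p.2.

End ASD.

Definition is_prior {R : realType} {n : nat}
    (prior : seq (R * {ffun 'I_n -> R})) : Prop :=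
  (forall p, p \in prior -> 0 <= p.1 /\ forall x, 0 <= p.2 x <= 1) /\
  \sum_(p <- prior) p.1 = 1.

(* Main.v *)
Require Import Defs.
From HB Require Import structures.
From mathcomp Require Import all_boot all_order all_algebra.
From mathcomp Require Import all_classical all_reals all_analysis.
From mathcomp Require Import measurable_realfun ereal lebesgue_integral.
From mathcomp.algebra_tactics Require Import ring lra.
From mathcomp Require Import zify.
Import Order.TTheory GRing.Theory Num.Theory.
Local Open Scope ring_scope.

Section Proof1.
Variables (R : realType) (n T : nat) (A : algorithm R n T).
Local Open Scope ereal_scope.

Lemma er_ge0 (th : 'I_n -> R) : (forall x, (0 <= th x)%R) ->
  forall m k (xs : k.-tuple 'I_n) ys, 0 <= exp_reward A th m xs ys.
Proof.
move=> th0; elim=> [|m IH] k xs ys //=.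
apply: sume_ge0 => x _; apply: mule_ge0; first by rewrite lee_fin policy_ge0.
apply: adde_ge0; first by rewrite lee_fin.
by apply: integral_ge0 => y _; exact: IH.
Qed.

Lemma rcons_meas k :
  measurable_fun [set: (k.-tuple R * R)%type]
    (fun p : k.-tuple R * R => [tuple of rcons p.1 p.2]).
Proof.
apply/measurable_fun_tnthP => i /=.
have [ik|ik] := ltnP i k.
  have -> : (@tnth k.+1 R ^~ i \o (fun p : k.-tuple R * R => [tuple of rcons p.1 p.2]))
      = (@tnth k R ^~ (Ordinal ik)) \o fst.
    apply/funext => p /=; rewrite !(tnth_nth 0%R) /= nth_rcons size_tuple ik.
    by [].
  exact: measurableT_comp (measurable_tnth _) measurable_fst.
have ik' : i = k :> nat by apply/eqP; rewrite eqn_leq ik -ltnS ltn_ord.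
have -> : (@tnth k.+1 R ^~ i \o (fun p : k.-tuple R * R => [tuple of rcons p.1 p.2]))
      = snd.
  apply/funext => p /=; rewrite !(tnth_nth 0%R) /= nth_rcons size_tuple ik'.
  by rewrite ltnn eqxx.
exact: measurable_snd.
Qed.

Lemma er_meas (th : 'I_n -> R) : (forall x, (0 <= th x)%R) ->
  forall m k (xs : k.-tuple 'I_n),
  measurable_fun [set: k.-tuple R] (fun ys => exp_reward A th m xs ys).
Proof.
move=> th0; elim=> [|m IH] k xs /=; first exact: measurable_cst.
apply: emeasurable_sum => x.
apply: emeasurable_funM.
  by apply/measurable_EFinP; exact: policy_measurable.
apply: emeasurable_funD; first exact: measurable_cst.
pose f := fun p : k.-tuple R * R =>
  exp_reward A th m [tuple of rcons xs x] [tuple of rcons p.1 p.2].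
have mf : measurable_fun setT f.
  exact: measurableT_comp (IH _ _) (rcons_meas k).
have f0 : forall p, 0 <= f p by move=> p; exact: er_ge0.
have := (@measurable_fun_fubini_tonelli_F _ _ _ _ R (normal_prob (th x) 1) f mf f0).
rewrite /fubini_F /f /=.
exact.
Qed.

Fact Iexp_key : unit. Proof. exact: tt. Qed.
Definition Iexp th m {k} (xs : k.-tuple 'I_n) (ys : k.-tuple R) x :=
  locked_with Iexp_key (\int[normal_prob (th x) 1]_y
            exp_reward A th m [tuple of rcons xs x] [tuple of rcons ys y]).

Lemma IexpE th m k (xs : k.-tuple 'I_n) ys x : Iexp th m xs ys x =
  \int[normal_prob (th x) 1]_y
            exp_reward A th m [tuple of rcons xs x] [tuple of rcons ys y].
Proof. by rewrite /Iexp unlock. Qed.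

Lemma erS th m k (xs : k.-tuple 'I_n) ys : exp_reward A th m.+1 xs ys =
  \sum_(x : 'I_n) (policy A xs ys x)%:E * ((th x)%:E + Iexp th m xs ys x).
Proof. by apply: eq_bigr => x _; rewrite IexpE. Qed.

Lemma mul_add_congr (p a a' b b' : \bar R) :
  a = a' -> b = b' -> p * (a + b) = p * (a' + b').
Proof. by move=> -> ->. Qed.

Lemma mul0_any (p : R) (a b : \bar R) : p = 0%R -> p%:E * a = p%:E * b.
Proof. by move=> ->; rewrite !mul0e. Qed.

Lemma int_normal_congr (a a' : R) (f g : R -> \bar R) : a = a' ->
  (forall y, f y = g y) ->
  \int[normal_prob a 1]_y f y = \int[normal_prob a' 1]_y g y.
Proof. by move=> <- fg; apply: eq_integral => y _; exact: fg. Qed.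

Lemma er_indep (th th' : 'I_n -> R) m k (xs : k.-tuple 'I_n) ys :
  (forall x, x \notin (xs : seq 'I_n) -> th x = th' x) ->
  exp_reward A th m xs ys = exp_reward A th' m xs ys.
Proof.
elim: m k xs ys => [//|m IH] k xs ys H.
rewrite !erS.
apply: eq_bigr => x _.
have [xin|xnin] := boolP (x \in (xs : seq 'I_n)).
  have p0 : policy A xs ys x = 0%R by exact: policy_unlabeled.
  exact: (mul0_any _ _ _ p0).
have hx := H x xnin.
apply: mul_add_congr; first by rewrite hx.
rewrite !IexpE; apply: int_normal_congr => // y.
apply: IH => z; rewrite /= mem_rcons in_cons negb_or => /andP[_ ?].
exact: H.
Qed.

Definition flip (x : 'I_n) (b : {ffun 'I_n -> bool}) : {ffun 'I_n -> bool} :=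
  [ffun z => if z == x then ~~ b z else b z].

Lemma flipK x : involutive (flip x).
Proof.
move=> b; apply/ffunP => z; rewrite !ffunE.
by case: eqP => [->|_]; rewrite ?negbK.
Qed.

Lemma flip_x x b : flip x b x = ~~ b x.
Proof. by rewrite ffunE eqxx. Qed.

Lemma flip_ne x z b : z != x -> flip x b z = b z.
Proof. by rewrite ffunE => /negbTE ->. Qed.

Definition bth (b : {ffun 'I_n -> bool}) : 'I_n -> R := fun x => (b x)%:R.

Lemma bth_ge0 b x : (0 <= bth b x)%R.
Proof. by rewrite /bth ler0n. Qed.

Lemma card_bool_ffun : #|{ffun 'I_n -> bool}| = (2 ^ n)%N.
Proof. by rewrite card_ffun card_bool card_ord. Qed.

Lemma sum_bx x : (\sum_(b : {ffun 'I_n -> bool}) (b x)%:R = (2 ^ n)%:R / 2 :> R)%R.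
Proof.
have e1 : (\sum_(b : {ffun 'I_n -> bool}) (b x)%:R =
    \sum_(b : {ffun 'I_n -> bool}) (~~ b x)%:R :> R)%R.
  rewrite (reindex_inj (inv_inj (flipK x))) /=.
  by apply: eq_bigr => b _; rewrite flip_x.
have e2 : (\sum_(b : {ffun 'I_n -> bool}) ((b x)%:R + (~~ b x)%:R) = (2 ^ n)%:R :> R)%R.
  rewrite (eq_bigr (fun _ => 1%R)); last by move=> b _; case: (b x); rewrite /= ?addr0 ?add0r.
  by rewrite sumr_const card_bool_ffun.
rewrite big_split /= -e1 in e2.
by rewrite -e2; field.
Qed.

Lemma half_e (S1 S2 : \bar R) (c : R) : 0 <= S1 -> 0 <= S2 -> S1 = S2 ->
  S1 + S2 = c%:E -> S1 = (c / 2)%:E.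
Proof.
move=> h1 h2 e12 hs.
have f1 : S1 \is a fin_num.
  rewrite ge0_fin_numE //; apply: (@le_lt_trans _ _ c%:E); last exact: ltry.
  by rewrite -hs leeDl.
have hs' : (fine S1 + fine S1 = c)%R.
  by apply: EFin_inj; rewrite EFinD fineK // [X in _ + X = _]e12.
rewrite -(fineK f1); congr (_%:E); by rewrite -hs'; field.
Qed.

Lemma int_sum_normal (a : R) (P : pred {ffun 'I_n -> bool})
    (F : {ffun 'I_n -> bool} -> R -> \bar R) :
  (forall b, measurable_fun setT (F b)) -> (forall b y, 0 <= F b y) ->
  \sum_(b | P b) \int[normal_prob a 1]_y F b y =
  \int[normal_prob a 1]_y \sum_(b | P b) F b y.
Proof.
move=> mF F0; rewrite -big_filter -ge0_integral_sum //.
by apply: eq_integral => y _; rewrite big_filter.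
Qed.

Lemma int_cst_normal (a c : R) (f : R -> \bar R) :
  (forall y, f y = c%:E) -> \int[normal_prob a 1]_y f y = c%:E.
Proof.
move=> fc; rewrite (eq_integral (cst c%:E)); last by move=> y _; exact: fc.
rewrite integral_cst // [X in _ * X](_ : _ = 1) ?mule1 //.
exact: probability_setT.
Qed.

Lemma Iexp_ge0 (th : 'I_n -> R) m k (xs : k.-tuple 'I_n) ys x : (forall z, (0 <= th z)%R) ->
  0 <= Iexp th m xs ys x.
Proof.
move=> th0; rewrite IexpE; apply: integral_ge0 => y _; exact: er_ge0.
Qed.

Lemma meas_E (th : 'I_n -> R) m k (xs : k.-tuple 'I_n) (ys : k.-tuple R) x :
  (forall z, (0 <= th z)%R) ->
  measurable_fun setT (fun y : R =>
     exp_reward A th m [tuple of rcons xs x] [tuple of rcons ys y]).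
Proof.
move=> th0.
have h := (measurableT_comp (@er_meas th th0 m _ [tuple of rcons xs x])
          (measurableT_comp (rcons_meas k) (pair1_measurable ys))).
exact: h.
Qed.

Lemma Iexp_b b m k (xs : k.-tuple 'I_n) ys x :
  Iexp (bth b) m xs ys x =
  \int[normal_prob (b x)%:R 1]_y
     exp_reward A (bth b) m [tuple of rcons xs x] [tuple of rcons ys y].
Proof. by rewrite IexpE. Qed.

Lemma sum_half m k (xs : k.-tuple 'I_n) (ys : (k.+1).-tuple R) x (c : R) :
  \sum_(b : {ffun 'I_n -> bool}) exp_reward A (bth b) m [tuple of rcons xs x] ys = c%:E ->
  \sum_(b : {ffun 'I_n -> bool} | b x) exp_reward A (bth b) m [tuple of rcons xs x] ys = (c / 2)%:E /\
  \sum_(b : {ffun 'I_n -> bool} | ~~ b x) exp_reward A (bth b) m [tuple of rcons xs x] ys = (c / 2)%:E.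
Proof.
move=> hc.
have e12 : \sum_(b : {ffun 'I_n -> bool} | b x) exp_reward A (bth b) m [tuple of rcons xs x] ys =
    \sum_(b : {ffun 'I_n -> bool} | ~~ b x) exp_reward A (bth b) m [tuple of rcons xs x] ys.
  rewrite (reindex_inj (inv_inj (flipK x))) /=.
  apply: eq_big => [b|b _]; first by rewrite flip_x.
  apply: er_indep => z; rewrite /= mem_rcons in_cons negb_or => /andP[zx _].
  by rewrite /bth flip_ne.
have hs : \sum_(b : {ffun 'I_n -> bool} | b x) exp_reward A (bth b) m [tuple of rcons xs x] ys +
    \sum_(b : {ffun 'I_n -> bool} | ~~ b x) exp_reward A (bth b) m [tuple of rcons xs x] ys = c%:E.
  by rewrite (bigID (fun b : {ffun 'I_n -> bool} => b x)) /= in hc.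
have g1 : 0 <= \sum_(b : {ffun 'I_n -> bool} | b x) exp_reward A (bth b) m [tuple of rcons xs x] ys.
  by apply: sume_ge0 => b _; apply: er_ge0; exact: bth_ge0.
have g2 : 0 <= \sum_(b : {ffun 'I_n -> bool} | ~~ b x) exp_reward A (bth b) m [tuple of rcons xs x] ys.
  by apply: sume_ge0 => b _; apply: er_ge0; exact: bth_ge0.
have h1 := @half_e _ _ _ g1 g2 e12 hs.
split => //; rewrite -e12; exact: h1.
Qed.

Lemma adde_congr (a a' b b' : \bar R) : a = a' -> b = b' -> a + b = a' + b'.
Proof. by move=> -> ->. Qed.

Lemma sum_Iexp_x m k (xs : k.-tuple 'I_n) (ys : k.-tuple R) x (c : R) :
  (forall y, \sum_(b : {ffun 'I_n -> bool})
     exp_reward A (bth b) m [tuple of rcons xs x] [tuple of rcons ys y] = c%:E) ->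
  \sum_(b : {ffun 'I_n -> bool}) Iexp (bth b) m xs ys x = c%:E.
Proof.
move=> hc.
pose F := fun (b : {ffun 'I_n -> bool}) (y : R) =>
  exp_reward A (bth b) m [tuple of rcons xs x] [tuple of rcons ys y].
have mF : forall b, measurable_fun setT (F b).
  by move=> b; apply: meas_E; exact: bth_ge0.
have F0 : forall b y, 0 <= F b y.
  by move=> b y; apply: er_ge0; exact: bth_ge0.
rewrite (bigID (fun b : {ffun 'I_n -> bool} => b x)) /=.
transitivity ((c / 2)%:E + (c / 2)%:E); last first.
  by rewrite -EFinD; congr (_%:E); field.
apply: adde_congr.
  rewrite (eq_bigr (fun b => \int[normal_prob 1 1]_y F b y)); last first.
    by move=> b bx; rewrite Iexp_b bx.
  rewrite (@int_sum_normal 1 (fun b => b x) F mF F0).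
  apply: int_cst_normal => y; by have [] := @sum_half _ _ _ _ _ _ (hc y).
rewrite (eq_bigr (fun b => \int[normal_prob 0 1]_y F b y)); last first.
  by move=> b /negbTE bx; rewrite Iexp_b bx.
rewrite (@int_sum_normal 0 (fun b => ~~ b x) F mF F0).
apply: int_cst_normal => y; by have [] := @sum_half _ _ _ _ _ _ (hc y).
Qed.

Lemma sumEFinM (F : 'I_n -> R) (c : R) :
  \sum_(x : 'I_n) (F x)%:E * c%:E = ((\sum_(x : 'I_n) F x) * c)%:E.
Proof.
rewrite (eq_bigr (fun x => (F x * c)%:E)); last by move=> x _; rewrite EFinM.
by rewrite sumEFin big_distrl.
Qed.

Lemma sum_er m : forall k (xs : k.-tuple 'I_n) (ys : k.-tuple R), (k + m <= T)%N ->
  \sum_(b : {ffun 'I_n -> bool}) exp_reward A (bth b) m xs ys =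
  ((2 ^ n)%:R * m%:R / 2)%:E.
Proof.
elim: m => [|m IH] k xs ys hk.
  by rewrite big1 // mulr0 mul0r.
have hkT : (k < T)%N by apply: leq_trans hk; rewrite addnS ltnS leq_addr.
transitivity (\sum_(b : {ffun 'I_n -> bool}) \sum_(x : 'I_n)
   (policy A xs ys x)%:E * ((bth b x)%:E + Iexp (bth b) m xs ys x)).
  by apply: eq_bigr => b _; exact: erS.
rewrite exchange_big /=.
have Hx : forall x, \sum_(b : {ffun 'I_n -> bool})
    ((bth b x)%:E + Iexp (bth b) m xs ys x) = ((2 ^ n)%:R * m.+1%:R / 2)%:E.
  move=> x; rewrite big_split /=.
  rewrite sumEFin /bth sum_bx.
  rewrite (@sum_Iexp_x m k xs ys x ((2 ^ n)%:R * m%:R / 2)); last first.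
    by move=> y; apply: IH; rewrite addSnnS.
  by rewrite -EFinD; congr (_%:E); field.
transitivity (\sum_(x : 'I_n)
   (policy A xs ys x)%:E * ((2 ^ n)%:R * m.+1%:R / 2)%:E).
  apply: eq_bigr => x _; rewrite -(Hx x) ge0_sume_distrr //.
  move=> b _; apply: adde_ge0; first by rewrite lee_fin bth_ge0.
  by apply: Iexp_ge0; exact: bth_ge0.
by rewrite sumEFinM policy_sum1 // mul1r.
Qed.

Lemma sum_nbx x : (\sum_(b : {ffun 'I_n -> bool}) (~~ b x)%:R = (2 ^ n)%:R / 2 :> R)%R.
Proof.
rewrite -(sum_bx x) (reindex_inj (inv_inj (flipK x))) /=.
by apply: eq_bigr => b _; rewrite flip_x negbK.
Qed.

Lemma sum_or y z : y != z ->
  (\sum_(b : {ffun 'I_n -> bool}) (b y || b z)%:R = 3 * (2 ^ n)%:R / 4 :> R)%R.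
Proof.
move=> yz.
rewrite (bigID (fun b : {ffun 'I_n -> bool} => b y)) /=.
rewrite (eq_bigr (fun _ => 1%R)); last by move=> b ->.
have e0 : (\sum_(b : {ffun 'I_n -> bool} | ~~ b y) (b y || b z)%:R =
   \sum_(b : {ffun 'I_n -> bool} | ~~ b y) (b z)%:R :> R)%R.
  by apply: eq_bigr => b /negbTE ->.
rewrite e0.
have e1 : (\sum_(b : {ffun 'I_n -> bool} | b y) 1 = (2 ^ n)%:R / 2 :> R)%R.
  by rewrite -(sum_bx y) big_mkcond /=; apply: eq_bigr => b _; case: (b y).
have e2 : (\sum_(b : {ffun 'I_n -> bool} | ~~ b y) (b z)%:R =
           \sum_(b : {ffun 'I_n -> bool} | ~~ b y) (~~ b z)%:R :> R)%R.
  rewrite (reindex_inj (inv_inj (flipK z))) /=.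
  apply: eq_big => [b|b _]; first by rewrite flip_ne // eq_sym.
  by rewrite flip_x.
have e3 : (\sum_(b : {ffun 'I_n -> bool} | ~~ b y) ((b z)%:R + (~~ b z)%:R) =
           (2 ^ n)%:R / 2 :> R)%R.
  rewrite -(sum_nbx y) big_mkcond /=; apply: eq_bigr => b _.
  by case: (b y); case: (b z); rewrite /= ?addr0 ?add0r.
rewrite big_split /= -e2 in e3.
rewrite e1.
move: e3; set X := (\sum_(b : {ffun 'I_n -> bool} | ~~ b y) (b z)%:R)%R.
set N : R := (2 ^ n)%:R => e3.
lra.
Qed.
End Proof1.

Arguments bth {R n}.

Lemma fin_of_sum (R : realType) (I : finType) (F : I -> \bar R) (c : R) :
  (forall i, (0 <= F i)%E) -> (\sum_i F i)%R = c%:E ->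
  forall i, F i = (fine (F i))%:E.
Proof.
move=> F0 hs i; apply/esym/fineK; rewrite ge0_fin_numE //.
apply: (@le_lt_trans _ _ c%:E); last exact: ltry.
rewrite -hs (bigD1 i) //=; apply: leeDl.
by apply: sume_ge0 => j _.
Qed.

Section Best.
Variables (R : realType) (T : nat) (hT : (2 <= T)%N).

Lemma yo_lt (j : 'I_T) : (2 * j < T ^ 2)%N.
Proof. have := ltn_ord j; nia. Qed.
Lemma zo_lt (j : 'I_T) : (2 * j + 1 < T ^ 2)%N.
Proof. have := ltn_ord j; nia. Qed.

Definition yo (j : 'I_T) : 'I_(T ^ 2) := Ordinal (yo_lt j).
Definition zo (j : 'I_T) : 'I_(T ^ 2) := Ordinal (zo_lt j).

Lemma yz_ne j : yo j != zo j.
Proof. by apply/eqP => /(congr1 val) /= /eqP; rewrite -addn1 => /eqP; lia. Qed.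

Lemma best_ge (b : {ffun 'I_(T ^ 2) -> bool}) :
  (\sum_(j < T) (b (yo j) || b (zo j))%:R <= best_reward (n := T ^ 2) (T := T) (bth b) :> R)%R.
Proof.
pose s : {ffun 'I_T -> 'I_(T ^ 2)} :=
  [ffun j => if b (yo j) then yo j else zo j].
have si : injectiveb s.
  apply/injectiveP => i j; rewrite !ffunE.
  case: ifP => _; case: ifP => _ /(congr1 val) /= h; apply/val_inj => /=; lia.
apply: le_trans (le_bigmax_cond _ _ si); rewrite le_eqVlt; apply/orP; left.
apply/eqP; apply: eq_bigr => j _; rewrite /bth ffunE.
by case E: (b (yo j)) => /=; rewrite ?E.
Qed.

Lemma sum_best :
  (\sum_(b : {ffun 'I_(T ^ 2) -> bool}) best_reward (n := T ^ 2) (T := T) (bth b)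
     >= T%:R * (3 * (2 ^ (T ^ 2))%:R / 4) :> R)%R.
Proof.
apply: le_trans (ler_sum _ (fun b _ => best_ge b)).
rewrite exchange_big /=.
rewrite (eq_bigr (fun _ => 3 * (2 ^ (T ^ 2))%:R / 4))%R; last first.
  by move=> j _; apply: sum_or; exact: yz_ne.
by rewrite sumr_const card_ord mulr_natl.
Qed.
End Best.

Theorem proposition1 (R : realType) :
  exists c : R, 0 < c /\
  forall T : nat, (2 <= T)%N ->
  forall A : algorithm R (T ^ 2) T,
  exists prior : seq (R * {ffun 'I_(T ^ 2) -> R}),
    is_prior prior /\ ((c * T%:R)%:E <= bayes_regret A prior)%E.
Proof.
exists (1 / 4); split; first by lra.
move=> T hT A.
pose N : R := (2 ^ (T ^ 2))%:R.
have N0 : 0 < N by rewrite ltr0n expn_gt0.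
pose w : R := N^-1.
pose thf (b : {ffun 'I_(T ^ 2) -> bool}) : {ffun 'I_(T ^ 2) -> R} :=
  [ffun x => (b x)%:R].
have thfE : forall b, (thf b : 'I_(T ^ 2) -> R) = bth b.
  by move=> b; apply/funext => x; rewrite /thf ffunE.
exists [seq (w, thf b) | b <- index_enum {ffun 'I_(T ^ 2) -> bool}].
split.
  split.
    move=> p /mapP [b _ ->] /=; split; first by rewrite invr_ge0 ltW.
    by move=> x; rewrite ffunE; case: (b x); rewrite /= ?lexx ?ler01.
  rewrite big_map sumr_const card_bool_ffun -mulr_natl.
  by rewrite mulfV // gt_eqF.
rewrite /bayes_regret big_map.
have hsum := @sum_er R (T ^ 2) T A T 0 [tuple] [tuple] (leqnn _).
have fin := @fin_of_sum R _ (fun b => exp_reward A (bth b) T [tuple] [tuple])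
  _ (fun b => @er_ge0 R _ T A (bth b) (@bth_ge0 R _ b) T 0 [tuple] [tuple]) hsum.
have -> : (\sum_(i <- index_enum {ffun 'I_(T ^ 2) -> bool})
    ((w, thf i).1%:E * expected_regret A (w, thf i).2)%E)%R =
    (\sum_(b : {ffun 'I_(T ^ 2) -> bool})
      (w * (best_reward (n := T ^ 2) (T := T) (bth b) -
        fine (exp_reward A (bth b) T [tuple] [tuple])))%:E)%R.
  apply: eq_bigr => b _ /=.
  rewrite /expected_regret /expected_reward thfE (fin b) -EFinB -EFinM.
  by [].
rewrite sumEFin lee_fin -big_distrr /= sumrB.
have hf : (\sum_(b : {ffun 'I_(T ^ 2) -> bool})
    fine (exp_reward A (bth b) T [tuple] [tuple]) = N * T%:R / 2)%R.
  apply: EFin_inj; rewrite -sumEFin -hsum.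
  by apply: eq_bigr => b _; rewrite -fin.
rewrite hf.
have hb := @sum_best R T hT.
set S := (\sum_(b : {ffun 'I_(T ^ 2) -> bool}) best_reward (bth b))%R in hb *.
rewrite -/N in hb.
have : (w * (T%:R * (3 * N / 4) - N * T%:R / 2) <= w * (S - N * T%:R / 2))%R.
  by apply: ler_wpM2l; [rewrite invr_ge0 ltW | lra].
apply: le_trans; rewrite le_eqVlt; apply/orP; left; apply/eqP.
rewrite /w; field; exact: lt0r_neq0.
Qed.
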